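(* Let $n\ge2$, $\alpha>1$, let $\Omega_\alpha=\{(x,y)\in\mathbb{R}\times\mathbb{R}^{n-1}:0<x<1,\ |y|<x^\alpha\}$, and for positive integers $j,m$ let $\ell=\lfloor\log_2 m\rfloor+1$ and \[ S_{j,m}=\Big\{(x,y): \tfrac{m}{2^{j+\ell}}\le x\le\tfrac{m+1}{2^{j+\ell}},\ \big(1-\tfrac{1}{2^{\ell-1}}\big)x^\alpha\le |y|\le\big(1-\tfrac{1}{2^{\ell}}\big)x^\alpha\Big\}. \] Then \[ \delta(S_{j,m})\ge C(\alpha)\,\frac{1}{2^{\alpha j+\ell}}, \] where $\delta(S_{j,m})$ is the Euclidean distance from $S_{j,m}$ to $\partial\Omega_\alpha$ and $C(\alpha)>0$ depends only on $\alpha$.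
   Context: Here $|y|$ is the Euclidean norm of $y\in\mathbb{R}^{n-1}$. *)

(* Defs.v *)
From HB Require Import structures.
From mathcomp Require Import all_boot all_order all_algebra.
From mathcomp Require Import all_classical all_reals all_analysis.
Set Implicit Arguments. Unset Strict Implicit. Unset Printing Implicit Defensive.
Import Order.TTheory GRing.Theory Num.Theory.
Import numFieldNormedType.Exports.
Local Open Scope classical_set_scope.
Local Open Scope ring_scope.

(* Points of R x R^(n-1) are pairs (x, y) with y : 'rV[R]_k, k = n - 1. *)

Definition eucl_norm (R : realType) (k : nat) (y : 'rV[R]_k) : R :=
  Num.sqrt (\sum_(i < k) y ord0 i ^+ 2).

Definition eucl_dist (R : realType) (k : nat) (p q : R * 'rV[R]_k) : R :=
  Num.sqrt ((p.1 - q.1) ^+ 2 + \sum_(i < k) (p.2 ord0 i - q.2 ord0 i) ^+ 2).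

(* topological boundary (product topology = Euclidean topology) *)
Definition tboundary (T : topologicalType) (A : set T) : set T :=
  closure A `\` interior A.

Definition Omega (R : realType) (k : nat) (alpha : R) : set (R * 'rV[R]_k) :=
  [set p | 0 < p.1 < 1 /\ eucl_norm p.2 < p.1 `^ alpha].

Definition ell (m : nat) : nat := (trunc_log 2 m).+1.

Definition Sjm (R : realType) (k : nat) (alpha : R) (j m : nat)
  : set (R * 'rV[R]_k) :=
  [set p | (m%:R / 2 ^+ (j + ell m) <= p.1 <= (m.+1)%:R / 2 ^+ (j + ell m))
        /\ ((1 - 1 / 2 ^+ (ell m).-1) * p.1 `^ alpha <= eucl_norm p.2
            <= (1 - 1 / 2 ^+ (ell m)) * p.1 `^ alpha)].

(* Main.v *)
Require Import Defs.
From HB Require Import structures.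
From mathcomp Require Import all_boot all_order all_algebra.
From mathcomp Require Import all_classical all_reals all_analysis.
From mathcomp Require Import ring lra.
Set Implicit Arguments. Unset Strict Implicit. Unset Printing Implicit Defensive.
Import Order.TTheory GRing.Theory Num.Theory.
Import numFieldNormedType.Exports.
Local Open Scope classical_set_scope.
Local Open Scope ring_scope.
Lemma sum_sq_ge0 (R : realType) k (a : 'I_k -> R) : 0 <= \sum_i a i ^+ 2.
Proof. by apply: sumr_ge0 => i _; exact: sqr_ge0. Qed.

Lemma sum_sq_eq0 (R : realType) k (a : 'I_k -> R) :
  \sum_i a i ^+ 2 = 0 -> forall i, a i = 0.
Proof.
move=> /eqP; rewrite psumr_eq0; last by move=> i _; exact: sqr_ge0.
move=> /allP H i; have := H i (mem_index_enum i).
by rewrite /= sqrf_eq0 => /eqP.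
Qed.

Lemma cs_ineq (R : realType) k (a b : 'I_k -> R) :
  \sum_i a i * b i <= Num.sqrt (\sum_i a i ^+ 2) * Num.sqrt (\sum_i b i ^+ 2).
Proof.
set A := Num.sqrt _; set B := Num.sqrt _.
have sA : A ^+ 2 = \sum_i a i ^+ 2 by rewrite sqr_sqrtr // sum_sq_ge0.
have sB : B ^+ 2 = \sum_i b i ^+ 2 by rewrite sqr_sqrtr // sum_sq_ge0.
have hA : 0 <= A := sqrtr_ge0 _.
have hB : 0 <= B := sqrtr_ge0 _.
have [A0|An0] := eqVneq A 0.
  have a0 : forall i, a i = 0 by apply: sum_sq_eq0; rewrite -sA A0 expr0n.
  by rewrite big1 ?A0 ?mul0r // => i _; rewrite a0 mul0r.
have [B0|Bn0] := eqVneq B 0.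
  have b0 : forall i, b i = 0 by apply: sum_sq_eq0; rewrite -sB B0 expr0n.
  by rewrite big1 ?B0 ?mulr0 // => i _; rewrite b0 mulr0.
have Ap : 0 < A by rewrite lt0r An0.
have Bp : 0 < B by rewrite lt0r Bn0.
have H : 0 <= \sum_i (B * a i - A * b i) ^+ 2 := @sum_sq_ge0 _ _ (fun i => B * a i - A * b i).
have E : \sum_i (B * a i - A * b i) ^+ 2 =
   B ^+ 2 * \sum_i a i ^+ 2 - (2 * A * B) * \sum_i a i * b i + A ^+ 2 * \sum_i b i ^+ 2.
  rewrite !mulr_sumr -sumrB -big_split /=; apply: eq_bigr => i _; ring.
rewrite E -sA -sB in H.
have : 0 <= (A * B) * (A * B - \sum_i a i * b i) by nra.
rewrite pmulr_rge0 ?mulr_gt0 //; lra.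
Qed.

Lemma mink (R : realType) k (a b : 'I_k -> R) :
  Num.sqrt (\sum_i (a i + b i) ^+ 2) <=
  Num.sqrt (\sum_i a i ^+ 2) + Num.sqrt (\sum_i b i ^+ 2).
Proof.
have := cs_ineq a b.
set A := Num.sqrt (\sum_i a i ^+ 2); set B := Num.sqrt (\sum_i b i ^+ 2).
have sA : A ^+ 2 = \sum_i a i ^+ 2 by rewrite sqr_sqrtr // sum_sq_ge0.
have sB : B ^+ 2 = \sum_i b i ^+ 2 by rewrite sqr_sqrtr // sum_sq_ge0.
have hA : 0 <= A := sqrtr_ge0 _.
have hB : 0 <= B := sqrtr_ge0 _.
have E : \sum_i (a i + b i) ^+ 2 =
   \sum_i a i ^+ 2 + 2 * \sum_i a i * b i + \sum_i b i ^+ 2.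
  rewrite mulr_sumr -!big_split /=; apply: eq_bigr => i _; ring.
move=> hS; rewrite E -sA -sB.
rewrite -[A + B]ger0_norm ?addr_ge0 // -sqrtr_sqr ler_sqrt; first nra.
exact: sqr_ge0.
Qed.

Lemma bern (R : realType) (alpha s : R) : 1 <= alpha -> 0 <= s -> s <= 2^-1 ->
  1 - 2 * alpha * s <= (1 - s) `^ alpha.
Proof.
move=> a1 s0 s1.
have p : 0 < 1 - s by lra.
rewrite /powR gt_eqF //.
have L : - (2 * s) <= ln (1 - s).
  have h1 : ln ((1 - s)^-1) <= (1 - s)^-1 - 1.
    have := @le_ln1Dx R ((1 - s)^-1 - 1).
    rewrite addrCA subrr addr0; apply.
    have : 0 < (1 - s)^-1 by rewrite invr_gt0.
    lra.
  have h2 : (1 - s)^-1 <= 1 + 2 * s.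
    rewrite -[X in X <= _]div1r ler_pdivrMr //; nra.
  rewrite lnV in h1; last by rewrite posrE.
  lra.
apply: le_trans (expR_ge1Dx _).
nra.
Qed.
Lemma cvg_bigsum (R : realType) (T : Type) (F : set_system T) (FF : Filter F)
  k (f : 'I_k -> T -> R) (l : 'I_k -> R) :
  (forall i, f i @ F --> l i) ->
  (fun x => \sum_i f i x) @ F --> \sum_i l i.
Proof.
move=> H; elim: (index_enum _) => [|i r IH].
  rewrite big_nil; under eq_fun do rewrite big_nil; exact: cvg_cst.
rewrite big_cons; under eq_fun do rewrite big_cons.
exact: cvgD.
Qed.

Lemma Omega_nbhs (R : realType) k (alpha : R) (q : R * 'rV[R]_k) :
  Omega alpha q -> nbhs q (Omega alpha).
Proof.
case: q => x y [/andP [x0 x1] hy].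
have c1 : (fun p : R * 'rV[R]_k => p.1) @ (x, y) --> x by exact: cvg_fst.
have c2 : (fun p : R * 'rV[R]_k => eucl_norm p.2 - p.1 `^ alpha) @ (x, y)
            --> eucl_norm y - x `^ alpha.
  apply: cvgB.
    rewrite /eucl_norm.
    have hs : (fun p : R * 'rV[R]_k => \sum_i p.2 ord0 i ^+ 2) @ (x, y) --> \sum_i y ord0 i ^+ 2.
      apply: cvg_bigsum => i.
      have hc : (fun p : R * 'rV[R]_k => p.2 ord0 i) @ (x, y) --> y ord0 i.
        have h1 : (fun p : R * 'rV[R]_k => p.2) @ (x, y) --> y by exact: cvg_snd.
        exact: (cvg_comp _ _ h1 (@coord_continuous R 1 k ord0 i y)).
      exact: cvgM.
    apply: (cvg_comp _ _ hs); exact: sqrt_continuous.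
  have c3 : (fun z : R => z `^ alpha) @ x --> x `^ alpha.
    have d : derivable (fun z : R => z `^ alpha) x 1.
      by apply: derivable_powR; rewrite in_itv /= andbT.
    have := differentiable_continuous ((derivable1_diffP _ _).1 d).
    exact.
  exact: (cvg_comp _ _ c1 c3).
have h1 := cvgr_gt x c1 0 x0.
have h2 := cvgr_lt x c1 1 x1.
have h3 : \forall p \near (x, y), eucl_norm p.2 - p.1 `^ alpha < 0.
  by apply: (cvgr_lt _ c2); rewrite subr_lt0 -/((x, y).1) -/((x,y).2).
near=> p.
split; first (apply/andP; split; near: p; [exact: h1 | exact: h2]).
rewrite -subr_lt0; near: p; exact: h3.
Unshelve. all: end_near.
Qed.

Theorem mainTheorem7 (R : realType) (alpha : R) (halpha : 1 < alpha) :
  exists C : R, 0 < C /\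
    forall (n : nat), (2 <= n)%N ->
    forall (j m : nat), (0 < j)%N -> (0 < m)%N ->
    forall (p q : R * 'rV[R]_(n.-1)),
      Sjm alpha j m p -> tboundary (@Omega R n.-1 alpha) q ->
      C * (2 `^ (alpha * j%:R + (ell m)%:R))^-1 <= eucl_dist p q.
Proof.
set c0 := (2^-1 : R) `^ alpha.
have c0p : 0 < c0 by rewrite powR_gt0 // invr_gt0.
have c01 : c0 <= 2^-1.
  apply: ge1r_powR; last exact: ltW.
  by apply/andP; split; lra.
exists (c0 / (1 + 2 * alpha)); split.
  by rewrite divr_gt0 //; lra.
move=> n n2 j m j0 m0 [x y] [x' y'] [/andP [hx1 hx2] /andP [hy1 hy2]] [_ hq].
rewrite /= in hx1 hx2 hy1 hy2.
set l := ell m in hx1 hx2 hy1 hy2 *.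
set J : R := 2 ^+ j.
set V : R := 2 ^+ l.
set u : R := 2 ^+ l.-1.
have up : 0 < u by rewrite exprn_gt0.
have hm1 : u <= m%:R.
  by rewrite /u -natrX ler_nat; exact: trunc_logP.
have hm2 : (m.+1)%:R <= V.
  by rewrite /V -natrX ler_nat; exact: trunc_log_ltn.
have VU : V = 2 * u by rewrite /V /u /l /ell /= exprS.
have J2 : 2 <= J.
  rewrite /J -natrX ler_nat.
  by rewrite -{1}(expn1 2) leq_exp2l.
rewrite exprD -/J -/V in hx1 hx2.
have JVp : 0 < J * V by rewrite VU; nra.
rewrite ler_pdivrMr // in hx1.
rewrite ler_pdivlMr // in hx2.
have xJ1 : 1 <= 2 * (x * J).
  rewrite -(ler_pM2r up) mul1r.
  apply: (le_trans hm1); apply: (le_trans hx1); rewrite VU; lra.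
have xJ2 : x * J <= 1.
  have Vp : 0 < V by rewrite VU; nra.
  rewrite -(ler_pM2r Vp) mul1r.
  apply: le_trans hm2; apply: le_trans hx2; lra.
have x0 : 0 < x by nra.
have xh : x <= 2^-1 by nra.
rewrite powRD; last by rewrite pnatr_eq0 implybT.
rewrite powR_mulrn; last lra.
rewrite -/V (mulrC alpha) powRrM powR_mulrn; last lra.
rewrite -/J.
set T := J `^ alpha.
have TJ : J <= T by apply: le1r_powR; lra.
have Tp : 0 < T by lra.
set X := x `^ alpha.
have Xx : X <= x by apply: ge1r_powR; [apply/andP; split; lra | lra].
have Xp : 0 < X by rewrite powR_gt0.
have XT : c0 <= X * T.
  rewrite /X /T -powRM; [|lra|lra].
  apply: ge0_ler_powR; [lra | by rewrite nnegrE; lra | by rewrite nnegrE; nra | nra].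
rewrite leNgt; apply/negP => hd.
set d := eucl_dist _ _ in hd.
have d0 : 0 <= d by exact: sqrtr_ge0.
have Vp : 0 < V by rewrite VU; nra.
have key : d * (1 + 2 * alpha) * V < X.
  rewrite ltr_pdivlMr ?mulr_gt0 // in hd.
  rewrite ltr_pdivlMr in hd; last lra.
  have : d * (1 + 2 * alpha) * V * T < X * T by lra.
  by rewrite ltr_pM2r.
have u1 : 1 <= u by rewrite /u exprn_ege1 //; lra.
have hV2 : 6 <= (1 + 2 * alpha) * V by rewrite VU; nra.
have d6 : d * 6 <= x.
  have : d * 6 <= d * ((1 + 2 * alpha) * V) by rewrite ler_wpM2l.
  rewrite mulrA; lra.
have dx : `|x - x'| <= d.
  rewrite -sqrtr_sqr /d /eucl_dist /= ler_sqrt; last first.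
    by apply: addr_ge0; [exact: sqr_ge0 | exact: sum_sq_ge0].
  rewrite lerDl; exact: sum_sq_ge0.
have dy : eucl_norm y' <= eucl_norm y + d.
  have := mink (fun i => y ord0 i) (fun i => y' ord0 i - y ord0 i).
  under eq_bigr do rewrite addrC subrK.
  move=> H; apply: (le_trans H); rewrite lerD2l /d /eucl_dist /= ler_sqrt; last first.
    by apply: addr_ge0; [exact: sqr_ge0 | exact: sum_sq_ge0].
  have -> : \sum_i (y' ord0 i - y ord0 i) ^+ 2 = \sum_i (y ord0 i - y' ord0 i) ^+ 2.
    by apply: eq_bigr => i _; ring.
  rewrite lerDr; exact: sqr_ge0.
move: dx; rewrite ler_norml => /andP [dx1 dx2].
have hO : Omega alpha (x', y').
  split; first by apply/andP; split => /=; lra.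
  rewrite /=.
  set s := d / x.
  have s0 : 0 <= s by rewrite divr_ge0 //; lra.
  have s1 : s <= 2^-1 by rewrite /s ler_pdivrMr //; lra.
  have Xs : X * s <= d.
    have -> : X * s = d * (X / x) by rewrite /s; field; lra.
    rewrite -[leRHS]mulr1 ler_wpM2l // ler_pdivrMr //; lra.
  have E : x - d = x * (1 - s) by rewrite /s; field; lra.
  have h1 : (x - d) `^ alpha <= x' `^ alpha.
    apply: ge0_ler_powR; [lra | by rewrite nnegrE; lra | by rewrite nnegrE; lra | lra].
  rewrite E powRM in h1; [|lra|lra].
  have h2 := bern (ltW halpha) s0 s1.
  have h3 : X * (1 - 2 * alpha * s) <= X * (1 - s) `^ alpha by rewrite ler_wpM2l //; lra.
  have key2 : d * (1 + 2 * alpha) < X / V by rewrite ltr_pdivlMr.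
  have h4 : (1 - 1 / V) * X = X - X / V by field; lra.
  rewrite h4 in hy2.
  have h5 : alpha * (X * s) <= alpha * d by rewrite ler_wpM2l //; lra.
  rewrite -/X in h1.
  nra.
by apply: hq; exact: Omega_nbhs hO.
Qed.
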